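(* Let $\tau\in(0,1]$ and let $\underline{q}^*$ be the optimal lower $\tau$-quantile. Any policy $\pi^*$ such that $F^{\pi^*}(\mathrm{prec}(\underline{q}^* )) = F^*(\mathrm{prec}(\underline{q}^* ))$, where $F^*(w)=\min_\pi F^\pi(w)$, is an optimal policy with regard to the lower $\tau$-quantile criterion.
   Context: An MDP is a tuple $(\mathcal S,\mathcal A,\mathcal P,r,s_0)$ with finite state set, finite action set, transition probabilities $\mathcal P(s,a,s')$, reward function $r:\mathcal S\times\mathcal A\to\mathcal R$, initial state $s_0$, and finite horizon $T$; policies are sequences of $T$ (possibly history-dependent, randomized) decision rules. The wealth of a history is $w(h_0)=w_0$, $w(h_t)=w(h_{t-1})\circ r(s_{t-1},a_{t-1})$ for a binary operation $\circ$ with left identity $w_0$. The set $\mathcal W_T$ of wealth levels of $T$-histories is totally ordered by $\preceq_{\mathcal W}$ with least element $\min(\mathcal W_T)$ and greatest element. For a policy $\pi$, $p^\pi(w)$ is the probability that the generated $T$-history has wealth $w$, and $F^\pi(w)=\sum_{w'\preceq_{\mathcal W}w}p^\pi(w')$. The lower $\tau$-quantile of $\pi$ is $\underline{q}^\pi_\tau=\min\{w\in\mathcal W_T:F^\pi(w)\ge\tau\}$; $\underline{q}^*=\max_\pi\underline{q}^\pi_\tau$, and a policy is optimal for the lower $\tau$-quantile criterion if its lower $\tau$-quantile equals $\underline{q}^*$. For $w\in\mathcal W_T$, $\mathrm{prec}(w)$ is the greatest (w.r.t. $\preceq_{\mathcal W}$) element of $\mathcal W_T$ strictly below $w$, and $\mathrm{prec}(w)=w$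 if no such element exists. *)

(* Defs.v *)
From HB Require Import structures.
From mathcomp Require Import all_boot all_order all_algebra.
Set Implicit Arguments. Unset Strict Implicit. Unset Printing Implicit Defensive.
Import Order.TTheory GRing.Theory Num.Theory.
Local Open Scope ring_scope.

Section MDP.
Context {R : realFieldType} {S A : finType} {d : Order.disp_t} {W : orderType d}.

Definition mdp_ok (P : S -> A -> S -> R) : Prop :=
  (forall s a s', 0 <= P s a s') /\ (forall s a, \sum_(s' : S) P s a s' = 1).

(* A history-dependent randomized policy: the decision rule d_t receives the
   history h_t = (s_0,a_0,...,s_{t-1},a_{t-1},s_t), given as the list of past
   (state, action) pairs (of length t) and the current state s_t, and returns
   a probability distribution over actions. *)
Definition policy := seq (S * A) -> S -> A -> R.

Definition policy_ok (pol : policy) : Prop :=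
  (forall h s a, 0 <= pol h s a) /\ (forall h s, \sum_(a : A) pol h s a = 1).

Definition history (T : nat) := (T.-tuple (S * A) * S)%type.

Definition hstate T (h : history T) (i : nat) : S :=
  nth h.2 (map fst h.1 ++ [:: h.2]) i.
Definition haction T (h : history T) (i : 'I_T) : A := (tnth h.1 i).2.

Definition hprob (P : S -> A -> S -> R) (s0 : S) T (pol : policy)
    (h : history T) : R :=
  (hstate h 0 == s0)%:R *
  \prod_(i < T) (pol (take i h.1) (hstate h i) (haction h i)
                 * P (hstate h i) (haction h i) (hstate h i.+1)).

Definition wealth (r : S -> A -> W) (op : W -> W -> W) (w0 : W) T
    (h : history T) : W :=
  foldl (fun w sa => op w (r sa.1 sa.2)) w0 h.1.

Definition WT r op w0 (s0 : S) T : seq W :=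
  [seq wealth r op w0 h | h in [pred h : history T | hstate h 0 == s0]].

Definition pmass P r op w0 s0 T pol (w : W) : R :=
  \sum_(h : history T | wealth r op w0 h == w) hprob P s0 pol h.

Definition cdf P r op w0 s0 T pol (w : W) : R :=
  \sum_(w' <- undup (WT r op w0 s0 T) | (w' <= w)%O) pmass P r op w0 s0 T pol w'.

(* lower tau-quantile: min { w in W_T | F^pi(w) >= tau }
   (the default w0 for an empty set never arises for valid policies) *)
Definition lower_quantile P r op w0 s0 T pol (tau : R) : W :=
  match [seq w <- WT r op w0 s0 T | tau <= cdf P r op w0 s0 T pol w] with
  | [::] => w0
  | x :: s => foldl Order.min x s
  end.

Definition prec r op w0 s0 T (w : W) : W :=
  match [seq x <- WT r op w0 s0 T | (x < w)%O] with
  | [::] => w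
  | x :: s => foldl Order.max x s
  end.

End MDP.

(* Main.v *)
Require Import Defs.
From HB Require Import structures.
From mathcomp Require Import all_boot all_order all_algebra.
Import Order.TTheory GRing.Theory Num.Theory.
Set Implicit Arguments. Unset Strict Implicit. Unset Printing Implicit Defensive.
Local Open Scope ring_scope.

Section Ord.
Context {d : Order.disp_t} {W : orderType d}.
Lemma foldl_min_mem (x : W) s : foldl Order.min x s \in x :: s.
Proof.
elim: s x => [|y s IH] x /=; first by rewrite inE.
have := IH (Order.min x y); rewrite !inE; case: (leP x y) => _ /orP[/eqP->|->];
  by rewrite ?eqxx ?orbT.
Qed.
Lemma foldl_min_le (x : W) s y : y \in x :: s -> (foldl Order.min x s <= y)%O.
Proof.
elim: s x y => [|z s IH] x y /=; first by rewrite inE => /eqP->.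
rewrite !inE => /orP[/eqP->|/orP[/eqP->|ys]].
- apply: le_trans (IH _ _ (mem_head _ _)) _; by rewrite ge_min lexx.
- apply: le_trans (IH _ _ (mem_head _ _)) _; by rewrite ge_min lexx orbT.
- by apply: IH; rewrite inE ys orbT.
Qed.
Lemma foldl_max_mem (x : W) s : foldl Order.max x s \in x :: s.
Proof.
elim: s x => [|y s IH] x /=; first by rewrite inE.
have := IH (Order.max x y); rewrite !inE; case: (leP x y) => _ /orP[/eqP->|->];
  by rewrite ?eqxx ?orbT.
Qed.
Lemma foldl_max_ge (x : W) s y : y \in x :: s -> (y <= foldl Order.max x s)%O.
Proof.
elim: s x y => [|z s IH] x y /=; first by rewrite inE => /eqP->.
rewrite !inE => /orP[/eqP->|/orP[/eqP->|ys]].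
- apply: le_trans _ (IH _ _ (mem_head _ _)); by rewrite le_max lexx.
- apply: le_trans _ (IH _ _ (mem_head _ _)); by rewrite le_max lexx orbT.
- by apply: IH; rewrite inE ys orbT.
Qed.
End Ord.

Section Mass.
Context {R : realFieldType} {S A : finType}.
Variables (P : S -> A -> S -> R) (pol : @policy R S A).
Hypothesis HP : mdp_ok P.
Hypothesis Hpol : policy_ok pol.

Definition hprobg (g : seq (S * A)) (s : S) T (h : @history S A T) : R :=
  (hstate h 0 == s)%:R *
  \prod_(i < T) (pol (g ++ take i h.1) (hstate h i) (haction h i)
                 * P (hstate h i) (haction h i) (hstate h i.+1)).

Definition hcons T (y : (S * A) * history T) : history T.+1 :=
  ([tuple of y.1 :: y.2.1], y.2.2).
Definition huncons T (h : history T.+1) : (S * A) * history T :=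
  (thead h.1, ([tuple of behead h.1], h.2)).

Lemma hcons_bij T : bijective (@hcons T).
Proof.
exists (@huncons T).
- by case=> x [t s]; rewrite /hcons /huncons /=; congr (_, (_, _)); apply: val_inj.
- case=> t s; rewrite /hcons /huncons /=; congr (_, _).
  case: t => [[|a t'] Ht] //; by apply: val_inj.
Qed.

Lemma sum_indicator (s1 : S) (F : S -> R) :
  F s1 = \sum_(s : S) (s1 == s)%:R * F s.
Proof.
rewrite (bigD1 s1) //= eqxx mul1r big1 ?addr0 // => s /negbTE.
by rewrite eq_sym => ->; rewrite mul0r.
Qed.

Lemma sum_pair (X Y : finType) (F : X * Y -> R) :
  \sum_(h : X * Y) F h = \sum_(x : X) \sum_(y : Y) F (x, y).
Proof. by rewrite pair_big; apply: eq_bigr; case. Qed.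

Definition prodpart (g : seq (S * A)) T (h : @history S A T) : R :=
  \prod_(i < T) (pol (g ++ take i h.1) (hstate h i) (haction h i)
                 * P (hstate h i) (haction h i) (hstate h i.+1)).

Lemma hprobg_cons T g s x (y : history T) :
  hprobg g s (hcons (x, y)) =
  (x.1 == s)%:R * (pol g x.1 x.2 * P x.1 x.2 (hstate y 0)) * prodpart (rcons g x) y.
Proof.
rewrite /hprobg big_ord_recl mulrA; congr (_ * _ * _).
- rewrite /haction /hcons /= tnth0 cats0; done.
- apply: eq_bigr => i _; rewrite /haction /hcons /= tnthS.
  by rewrite /bump leq0n add1n add0n cat_rcons.
Qed.

Lemma hprobg_sum T : forall g s, \sum_(h : history T) hprobg g s h = 1.
Proof.
elim: T => [|T IH] g s.
  rewrite sum_pair /hprobg.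
  rewrite (big_pred1 [tuple]) //=; last by move=> t; symmetry; apply/eqP; exact: tuple0.
  rewrite /hstate /= (bigD1 s) //= big_ord0 (eqxx s) mul1r big1 ?addr0 // => s' /negbTE.
  by rewrite /hstate /= => ->; rewrite mul0r.
rewrite (reindex (@hcons T)) /=; last exact: onW_bij (hcons_bij T).
have Hc : forall g' s2 a, \sum_(y : history T) P s2 a (hstate y 0) * prodpart g' y = 1.
  move=> g' s2 a.
  transitivity (\sum_(s1 : S) P s2 a s1 * \sum_(y : history T) hprobg g' s1 y).
    symmetry; under eq_bigr => s1 _ do rewrite mulr_sumr.
    rewrite exchange_big /=; apply: eq_bigr => y _.
    rewrite (sum_indicator (hstate y 0) (P s2 a)) mulr_suml.
    apply: eq_bigr => s1 _; rewrite /hprobg mulrA; congr (_ * _); exact: mulrC.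
  by under eq_bigr => s1 _ do rewrite IH mulr1; case: HP.
rewrite sum_pair sum_pair.
rewrite (bigD1 s) //= [X in _ + X]big1 ?addr0; last first.
  move=> s' /negbTE Hs; apply: big1 => a _; apply: big1 => y _.
  by rewrite hprobg_cons /= Hs !mul0r.
rewrite -(proj2 Hpol g s); apply: eq_bigr => a _.
under eq_bigr => y _ do rewrite hprobg_cons /= eqxx mul1r -mulrA.
by rewrite -mulr_sumr Hc mulr1.
Qed.
End Mass.

Section Main.
Context {R : realFieldType} {S A : finType} {d : Order.disp_t} {W : orderType d}.
Variables (P : S -> A -> S -> R) (r : S -> A -> W) (op : W -> W -> W) (w0 : W)
  (s0 : S) (T : nat).
Hypothesis HP : mdp_ok P.

Lemma hprob_ge0 (pol : @policy R S A) (h : @history S A T) : policy_ok pol -> 0 <= hprob P s0 pol h.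
Proof.
move=> Hpol; rewrite /hprob mulr_ge0 ?ler0n //; apply: prodr_ge0 => i _.
by rewrite mulr_ge0 //; [case: Hpol | case: HP].
Qed.

Lemma hprob_sum (pol : @policy R S A) : policy_ok pol ->
  \sum_(h : @history S A T) hprob P s0 pol h = 1.
Proof. move=> Hpol; exact: (@hprobg_sum _ _ _ P pol HP Hpol T [::] s0). Qed.

Lemma pmass_ge0 (pol : @policy R S A) w : policy_ok pol ->
  0 <= pmass P r op w0 s0 T pol w.
Proof. by move=> Hpol; apply: sumr_ge0 => h _; apply: hprob_ge0. Qed.

Lemma cdf_mono (pol : @policy R S A) w w' : policy_ok pol -> (w <= w')%O ->
  cdf P r op w0 s0 T pol w <= cdf P r op w0 s0 T pol w'.
Proof.
move=> Hpol Hw; rewrite /cdf [X in _ <= X]big_mkcond [X in X <= _]big_mkcond.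
apply: ler_sum => x _; case: ifP => Hx.
  by rewrite (le_trans Hx Hw).
by case: ifP => _ //; apply: pmass_ge0.
Qed.

Lemma cdf_total (pol : @policy R S A) : policy_ok pol ->
  \sum_(w' <- undup (WT r op w0 s0 T)) pmass P r op w0 s0 T pol w' = 1.
Proof.
move=> Hpol; rewrite -(hprob_sum Hpol) /pmass.
under eq_bigr => w' _ do rewrite big_mkcond.
rewrite exchange_big /=; apply: eq_bigr => h _.
case Hs: (hstate h 0 == s0).
  have Hm : wealth r op w0 h \in undup (WT r op w0 s0 T).
    by rewrite mem_undup /WT; apply: image_f; rewrite inE.
  rewrite (bigD1_seq _ Hm (undup_uniq _)) /= eqxx big1 ?addr0 // => i /negbTE.
  by rewrite eq_sym => ->.
have -> : hprob P s0 pol h = 0 by rewrite /hprob Hs mul0r.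
by apply: big1 => i _; case: ifP.
Qed.

Lemma exists_good (pol : @policy R S A) (tau : R) : policy_ok pol -> tau <= 1 ->
  exists2 w, w \in WT r op w0 s0 T & tau <= cdf P r op w0 s0 T pol w.
Proof.
move=> Hpol Ht.
have [h Hh] : exists h : @history S A T, hprob P s0 pol h != 0.
  case: (pickP (fun h : @history S A T => hprob P s0 pol h != 0)) => [h Hh|H0].
    by exists h.
  have := hprob_sum Hpol; rewrite big1 => [/eqP|h _]; first by rewrite eq_sym oner_eq0.
  by move/negbFE/eqP: (H0 h).
have Hs : hstate h 0 == s0.
  by apply: contraNT Hh => /negbTE Hs; rewrite /hprob Hs mul0r.
have Hm : wealth r op w0 h \in WT r op w0 s0 T by apply: image_f; rewrite inE.
case E: (WT r op w0 s0 T) Hm => [//|x s] _.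
exists (foldl Order.max x s); first exact: foldl_max_mem.
rewrite /cdf (le_trans Ht) // -(cdf_total Hpol) E.
rewrite [X in X <= _]big_seq_cond [X in _ <= X]big_seq_cond.
rewrite le_eqVlt; apply/orP; left; apply/eqP; apply: eq_bigl => w; rewrite andbT.
apply/idP/idP => [H|/andP[]//]; rewrite H foldl_max_ge //; by rewrite -mem_undup.
Qed.

Lemma lq_spec (pol : @policy R S A) (tau : R) : policy_ok pol -> tau <= 1 ->
  let m := lower_quantile P r op w0 s0 T pol tau in
  [/\ m \in WT r op w0 s0 T, tau <= cdf P r op w0 s0 T pol m &
      forall w, w \in WT r op w0 s0 T -> tau <= cdf P r op w0 s0 T pol w -> (m <= w)%O].
Proof.
move=> Hpol Ht /=; rewrite /lower_quantile.
have [w Hw Hc] := exists_good Hpol Ht.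
have Hf : w \in [seq w <- WT r op w0 s0 T | tau <= cdf P r op w0 s0 T pol w].
  by rewrite mem_filter Hw Hc.
case E: [seq w <- _ | _] Hf => [//|x s] _.
have := foldl_min_mem x s; rewrite -E mem_filter => /andP[H1 H2].
split=> // w' Hw' Hc'; apply: foldl_min_le; rewrite -E mem_filter Hw' Hc'.
done.
Qed.

End Main.

Theorem lemma3 (R : realFieldType) (S A : finType) (d : Order.disp_t)
    (W : orderType d)
    (P : S -> A -> S -> R) (r : S -> A -> W) (op : W -> W -> W) (w0 : W)
    (s0 : S) (T : nat)
    (HP : mdp_ok P) (Hw0 : forall w, op w0 w = w)
    (tau : R) (Htau : 0 < tau <= 1)
    (qstar : W)
    (Hq_att : exists pol : policy, policy_ok pol /\
                lower_quantile P r op w0 s0 T pol tau = qstar)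
    (Hq_max : forall pol : policy, policy_ok pol ->
                (lower_quantile P r op w0 s0 T pol tau <= qstar)%O)
    (pistar : policy) (Hpistar : policy_ok pistar)
    (Hmin : forall pol : policy, policy_ok pol ->
              cdf P r op w0 s0 T pistar (prec r op w0 s0 T qstar)
              <= cdf P r op w0 s0 T pol (prec r op w0 s0 T qstar)) :
  lower_quantile P r op w0 s0 T pistar tau = qstar.
Proof.
case/andP: Htau => _ Ht1.
case: Hq_att => pol1 [Hpol1 Hq].
have [Hq1 Hq2 Hq3] := @lq_spec _ _ _ _ _ P r op w0 s0 T HP _ _ Hpol1 Ht1; rewrite Hq in Hq1 Hq2 Hq3.
have [Hm1 Hm2 Hm3] := @lq_spec _ _ _ _ _ P r op w0 s0 T HP _ _ Hpistar Ht1.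
set m := lower_quantile P r op w0 s0 T pistar tau in Hm1 Hm2 Hm3 *.
have Hmq := Hq_max _ Hpistar.
suff Hn : ~~ (m < qstar)%O.
  by apply/eqP; rewrite eq_le Hmq /= leNgt.
apply/negP => Hlt.
move: Hmin; rewrite /prec.
case E: [seq x <- WT r op w0 s0 T | (x < qstar)%O] => [|x s] Hmin.
  have : m \in [seq x <- WT r op w0 s0 T | (x < qstar)%O] by rewrite mem_filter Hlt Hm1.
  by rewrite E.
have := foldl_max_mem x s; rewrite -E mem_filter => /andP[Hp1 Hp2].
set p := foldl Order.max x s in Hp1 Hp2 Hmin.
have Hmp : (m <= p)%O.
  by apply: foldl_max_ge; rewrite -E mem_filter Hlt Hm1.
have Hc : cdf P r op w0 s0 T pol1 p < tau.
  rewrite ltNge; apply/negP => Hc; have := Hq3 _ Hp2 Hc.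
  by rewrite leNgt Hp1.
have := le_lt_trans (@cdf_mono _ _ _ _ _ P r op w0 s0 T HP _ _ _ Hpistar Hmp)
          (le_lt_trans (Hmin _ Hpol1) Hc).
by rewrite ltNge Hm2.
Qed.
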